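(* Let $L\in\{4,5\}$ and let $w:\{0,1\}^L\to\mathbb{R}_{\ge 0}$ be a generic fitness landscape that induces a staircase triangulation of $[0,1]^L$. Then the fitness landscape has at most four peaks.
   Context: Genotypes $g\in\{0,1\}^L$ are identified with vertices of $[0,1]^L$. The triangulation induced by $w$ is the regular subdivision of $[0,1]^L$ obtained by projecting onto $[0,1]^L$ the upper faces of $\mathrm{conv}\{(g,w_g)\}\subset\mathbb{R}^{L+1}$; $w$ is generic if all $w_g$ are distinct and this subdivision is a triangulation. A peak is a genotype all of whose Hamming-distance-$1$ neighbours have strictly lower fitness. The standard staircase triangulation consists of the $L!$ simplices $\{g_0,g_1,\dots,g_L\}$ where $g_0=0\cdots0$, $g_L=1\cdots1$, and each $g_{k+1}$ is obtained from $g_k$ by changing one $0$ to $1$. A staircase triangulation is any image of the standard staircase triangulation under a symmetry of the cube (coordinate permutations and bit flips). *)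

(* Defs.v *)
From HB Require Import structures.
From mathcomp Require Import all_boot all_order all_fingroup all_algebra.
From mathcomp Require Import reals.
Set Implicit Arguments. Unset Strict Implicit. Unset Printing Implicit Defensive.
Import Order.TTheory GRing.Theory Num.Theory.
Local Open Scope ring_scope.

Definition genotype (L : nat) := {ffun 'I_L -> bool}.

Definition hamming_neighbour (L : nat) (g h : genotype L) : bool :=
  #|[set i | g i != h i]| == 1%N.

Definition peak (R : realType) (L : nat) (w : genotype L -> R) (g : genotype L) : bool :=
  [forall h : genotype L, hamming_neighbour g h ==> (w h < w g)].

Definition affine_at (R : realType) (L : nat) (a : 'I_L -> R) (b : R) (g : genotype L) : R :=
  \sum_(i < L) a i * (g i)%:R + b.

Definition full_dim (R : realType) (L : nat) (S : {set genotype L}) : Prop :=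
  forall (c : 'I_L -> R) (d : R),
    (forall g, g \in S -> \sum_(i < L) c i * (g i)%:R = d) -> forall i, c i = 0.

(* S is (the vertex set of) a maximal cell of the regular subdivision induced by w:
   it is the set of lifted points (g, w g) on a non-vertical upper supporting
   hyperplane x_{L+1} = a.x + b, and its projection is full-dimensional. *)
Definition upper_cell (R : realType) (L : nat) (w : genotype L -> R)
    (S : {set genotype L}) : Prop :=
  exists (a : 'I_L -> R) (b : R),
    (forall g, w g <= affine_at a b g) /\
    (forall g, g \in S <-> w g = affine_at a b g) /\
    full_dim R S.

Definition generic (R : realType) (L : nat) (w : genotype L -> R) : Prop :=
  injective w /\ (forall S, upper_cell w S -> #|S| = L.+1).

Definition induces (R : realType) (L : nat) (w : genotype L -> R)
    (T : {set {set genotype L}}) : Prop :=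
  forall S, upper_cell w S <-> S \in T.

(* Standard staircase triangulation: for each permutation s, the chain
   g_k i = (s i < k), k = 0..L, from 0...0 to 1...1 adding one 1 per step. *)
Definition staircase_simplex (L : nat) (s : 'S_L) : {set genotype L} :=
  [set [ffun i => (s i < k)%N] | k : ordinal L.+1].

Definition standard_staircase (L : nat) : {set {set genotype L}} :=
  [set staircase_simplex s | s : 'S_L].

Definition cube_sym (L : nat) (p : 'S_L) (f : {ffun 'I_L -> bool}) (g : genotype L)
    : genotype L :=
  [ffun i => g (p i) (+) f i].

Definition staircase_triangulation (L : nat) (T : {set {set genotype L}}) : Prop :=
  exists (p : 'S_L) (f : {ffun 'I_L -> bool}),
    T = [set (cube_sym p f) @: S | S : {set genotype L} in standard_staircase L].

(* Main.v *)
Require Import Defs.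
From HB Require Import structures.
From mathcomp Require Import all_boot all_order all_fingroup all_algebra.
From mathcomp Require Import reals.
From mathcomp Require Import ring lra zify.
Set Implicit Arguments. Unset Strict Implicit. Unset Printing Implicit Defensive.
Import Order.TTheory GRing.Theory Num.Theory.

Definition cntl (P : bool -> bool -> bool) (s t : seq bool) :=
  count (fun pr => P pr.1 pr.2) (zip s t).
Definition badl s t := (cntl (fun a b => a && ~~ b) s t == 1%N) &&
                       (0 < cntl (fun a b => b && ~~ a) s t)%N.
Definition okl (s t : seq bool) := [&& s != t, cntl (fun a b => a != b) s t != 1%N,
   ~~ badl s t & ~~ badl t s].
Fixpoint allseq n : seq (seq bool) :=
  if n is n'.+1 then [seq b :: s | b <- [:: true; false], s <- allseq n'] else [:: [::]].

Definition check n :=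
  let U := allseq n in
  all (fun a => all (fun b => if okl a b then
   all (fun c => if okl a c && okl b c then
   all (fun d => if [&& okl a d, okl b d & okl c d] then
   all (fun e => ~~ [&& okl a e, okl b e, okl c e & okl d e]) U else true) U else true) U else true) U) U.

Lemma check4 : check 4. Proof. vm_compute. reflexivity. Qed.
Lemma check5 : check 5. Proof. vm_compute. reflexivity. Qed.


Lemma allseqP n s : size s = n -> s \in allseq n.
Proof.
elim: n s => [|n IH] [|b s] //= [] /IH Hs.
rewrite mem_cat; case: b.
  by apply/orP; left; rewrite map_f.
by apply/orP; right; rewrite cats0 map_f.
Qed.

Section Link.
Variable L : nat.
Definition bits (g : genotype L) : seq bool := [seq g i | i <- enum 'I_L].

Lemma size_bits g : size (bits g) = L.
Proof. by rewrite size_map size_enum_ord. Qed.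

Lemma cntl_bits P (x y : genotype L) :
  cntl P (bits x) (bits y) = #|[set i | P (x i) (y i)]|.
Proof.
rewrite /cntl /bits zip_map count_map cardE /enum_mem size_filter.
rewrite /enum_mem count_filter; apply: eq_count => i; by rewrite /= !inE andbT.
Qed.

Lemma bits_inj (x y : genotype L) : bits x = bits y -> x = y.
Proof.
move=> /eq_in_map H; apply/ffunP => i; apply: H; by rewrite mem_enum.
Qed.

Definition badg (x y : genotype L) :=
  (#|[set i | x i && ~~ y i]| == 1%N) && (0 < #|[set i | y i && ~~ x i]|)%N.
Definition okg (x y : genotype L) :=
  [&& x != y, ~~ hamming_neighbour x y, ~~ badg x y & ~~ badg y x].

Lemma okg_okl x y : okg x y -> okl (bits x) (bits y).
Proof.
rewrite /okg /okl /badl /badg /hamming_neighbour !cntl_bits.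
case/and4P => H1 -> -> ->; rewrite !andbT.
by apply: contra H1 => /eqP /bits_inj ->.
Qed.
End Link.

Lemma no5 (L : nat) (hL : (L == 4%N) || (L == 5%N)) (a b c d e : genotype L) :
  okg a b -> okg a c -> okg b c -> okg a d -> okg b d -> okg c d ->
  okg a e -> okg b e -> okg c e -> okg d e -> False.
Proof.
have HC : check L by case/orP: hL => /eqP ->; [exact: check4 | exact: check5].
move=> /okg_okl ab /okg_okl ac /okg_okl bc /okg_okl ad /okg_okl bd /okg_okl cd
  /okg_okl ae /okg_okl be /okg_okl ce /okg_okl de.
have U (z : genotype L) : bits z \in allseq L by apply: allseqP; apply: size_bits.
move: HC; rewrite /check => /allP /(_ _ (U a)) /allP /(_ _ (U b)); rewrite ab.
move=> /allP /(_ _ (U c)); rewrite ac bc /=.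
move=> /allP /(_ _ (U d)); rewrite ad bd cd /=.
by move=> /allP /(_ _ (U e)); rewrite ae be ce de.
Qed.


Section Rank.
Variable L : nat.
Variable key : 'I_L -> nat.
Hypothesis key_inj : injective key.

Definition rk i := #|[set j | key j < key i]|.

Lemma rk_lt i : rk i < L.
Proof.
rewrite /rk; suff : #|[set j | key j < key i]| < #|[set: 'I_L]| by rewrite cardsT card_ord.
apply: proper_card.
rewrite properT; apply/eqP => E.
have : i \in [set j | key j < key i] by rewrite E inE.
by rewrite inE ltnn.
Qed.

Lemma rk_inj : injective rk.
Proof.
have H i j : key i < key j -> rk i < rk j.
  move=> lt; apply: proper_card; apply/properP; split.
    apply/subsetP => k; rewrite !inE => h; exact: ltn_trans h lt.
  by exists i; rewrite !inE ?lt ?ltnn.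
move=> i j E; case: (ltngtP (key i) (key j)) => h.
- by move: (H _ _ h); rewrite E ltnn.
- by move: (H _ _ h); rewrite E ltnn.
- exact: key_inj.
Qed.

Lemma rk_level t : [set i | rk i < #|[set j | key j < t]|] = [set j | key j < t].
Proof.
apply/setP => i; rewrite !inE; case: (ltnP (key i) t) => h.
  apply: proper_card; apply/properP; split.
    apply/subsetP => k; rewrite !inE => h'; exact: ltn_trans h' h.
  by exists i; rewrite !inE ?h ?ltnn.
rewrite ltnNge; apply/negbF; apply: subset_leq_card.
apply/subsetP => k; rewrite !inE => h'; exact: leq_trans h' h.
Qed.

Definition rkfun i : 'I_L := Ordinal (rk_lt i).
Lemma rkfun_inj : injective rkfun.
Proof. by move=> i j /(congr1 val) /rk_inj. Qed.
Definition rkperm : 'S_L := perm rkfun_inj.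
Lemma rkpermE i : (rkperm i : nat) = rk i.
Proof. by rewrite /rkperm permE. Qed.

Lemma level_chain t : exists k : 'I_L.+1,
  [ffun i => (rkperm i < k)%N] = [ffun i => key i < t] :> genotype L.
Proof.
have hk : #|[set j | key j < t]| < L.+1.
  by rewrite ltnS; apply: leq_trans (max_card _) _; rewrite card_ord.
exists (Ordinal hk); apply/ffunP => i; rewrite !ffunE /= rkpermE.
by have := rk_level t; move/setP/(_ i); rewrite !inE.
Qed.
End Rank.

Section Geo.
Variable L : nat.
Definition gmeet (x y : genotype L) : genotype L := [ffun i => x i && y i].
Definition gjoin (x y : genotype L) : genotype L := [ffun i => x i || y i].

Lemma lvl (c t i : nat) : i < L -> (c * L + i < t * L)%N = (c < t)%N.
Proof.
move=> hi; case: (ltnP c t) => h.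
  apply: (@leq_trans (c.+1 * L)); first by rewrite mulSn addnC ltn_add2r.
  exact: leq_mul.
apply/negbTE; rewrite -leqNgt; apply: (@leq_trans (c * L)); first exact: leq_mul.
exact: leq_addr.
Qed.

Lemma perm_chain (x y : genotype L) : exists s : 'S_L, exists k1 k2 k3 : 'I_L.+1,
  [/\ [ffun i => (s i < k1)%N] = gmeet x y, [ffun i => (s i < k2)%N] = x &
      [ffun i => (s i < k3)%N] = gjoin x y].
Proof.
pose cls (i : 'I_L) := if x i && y i then 0 else if x i then 1 else if y i then 2 else 3.
pose key (i : 'I_L) := cls i * L + i.
have kinj : injective key.
  move=> i j E; apply: val_inj.
  have := congr1 (modn^~ L) E; rewrite /key !modnMDl !modn_small //; exact: ltn_ord.
exists (rkperm kinj).
have [k1 E1] := level_chain kinj (1 * L).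
have [k2 E2] := level_chain kinj (2 * L).
have [k3 E3] := level_chain kinj (3 * L).
exists k1, k2, k3; split.
- rewrite E1; apply/ffunP => i; rewrite !ffunE /key lvl ?ltn_ord // /cls.
  by case: (x i); case: (y i).
- rewrite E2; apply/ffunP => i; rewrite !ffunE /key lvl ?ltn_ord // /cls.
  by case: (x i); case: (y i).
- rewrite E3; apply/ffunP => i; rewrite !ffunE /key lvl ?ltn_ord // /cls.
  by case: (x i); case: (y i).
Qed.

Lemma chain_cmp (s : 'S_L) (k1 k2 : 'I_L.+1) :
  let g1 := [ffun i => (s i < k1)%N] : genotype L in
  let g2 := [ffun i => (s i < k2)%N] : genotype L in
  (forall i, g1 i -> g2 i) \/ (forall i, g2 i -> g1 i).
Proof.
move=> g1 g2; case: (leqP k1 k2) => h; [left | right] => i; rewrite /g1 /g2 !ffunE => h'.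
  exact: leq_trans h' h.
exact: ltn_trans h' h.
Qed.

Lemma cube_sym_inj (p : 'S_L) f : injective (cube_sym p f).
Proof.
move=> g h E; apply/ffunP => j.
have := congr1 (fun g : genotype L => g (p^-1 j)%g) E; rewrite /cube_sym !ffunE permKV.
by case: (f _); case: (g j); case: (h j).
Qed.

Local Open Scope ring_scope.
Lemma modular (R : realType) (a : 'I_L -> R) b (p : 'S_L) f (x y : genotype L) :
  affine_at a b (cube_sym p f x) + affine_at a b (cube_sym p f y) =
  affine_at a b (cube_sym p f (gmeet x y)) + affine_at a b (cube_sym p f (gjoin x y)).
Proof.
rewrite /affine_at.
have H : \sum_(i < L) a i * ((cube_sym p f x i : nat)%:R) +
          \sum_(i < L) a i * ((cube_sym p f y i : nat)%:R) =
          \sum_(i < L) a i * ((cube_sym p f (gmeet x y) i : nat)%:R) +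
          \sum_(i < L) a i * ((cube_sym p f (gjoin x y) i : nat)%:R).
  rewrite -!big_split; apply: eq_bigr => i _; rewrite /cube_sym /gmeet /gjoin !ffunE.
  by case: (x (p i)); case: (y (p i)); case: (f i) => /=; ring.
lra.
Qed.

Lemma key_ineq (R : realType) (w : genotype L -> R) (p : 'S_L) f
  (T : {set {set genotype L}})
  (HT : T = [set (cube_sym p f) @: S | S : {set genotype L} in standard_staircase L])
  (Hind : induces w T) (x y : genotype L) i j :
  x i && ~~ y i -> y j && ~~ x j ->
  w (cube_sym p f x) + w (cube_sym p f y) <
  w (cube_sym p f (gmeet x y)) + w (cube_sym p f (gjoin x y)).
Proof.
move=> hi hj.
have [s [k1 [k2 [k3 [E1 E2 E3]]]]] := perm_chain x y.
set c := cube_sym p f.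
have cinj : injective c by exact: cube_sym_inj.
set S := staircase_simplex s.
have HS : c @: S \in T.
  rewrite HT; apply: imset_f; rewrite /standard_staircase; exact: imset_f.
have [a [b [Hle [Hiff _]]]] := (Hind (c @: S)).2 HS.
have inS (k : 'I_L.+1) : [ffun i => (s i < k)%N] \in S by apply/imsetP; exists k.
have eqS z : z \in S -> w (c z) = affine_at a b (c z).
  by move=> zS; apply/Hiff; apply: imset_f.
have yS : y \notin S.
  apply/negP => /imsetP [k _ Ey].
  case: (chain_cmp s k k2) => /= H.
    by move: (H j); rewrite -Ey E2; case/andP: hj => -> /negbTE ->; move/(_ isT).
  by move: (H i); rewrite -Ey E2; case/andP: hi => -> /negbTE ->; move/(_ isT).
have ylt : w (c y) < affine_at a b (c y).
  rewrite lt_neqAle Hle andbT; apply/eqP => E.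
  have : c y \in c @: S by apply/Hiff.
  by rewrite (mem_imset _ _ cinj) (negbTE yS).
have := modular a b p f x y.
rewrite -/c -(eqS x) ?E2 -?(eqS (gmeet x y)) ?E1 -?(eqS (gjoin x y)) ?E3;
  [| by rewrite -E3 | by rewrite -E1 | by rewrite -E2].
move=> M; lra.
Qed.
End Geo.

Local Open Scope ring_scope.

Lemma hn_sym L (x y : genotype L) : hamming_neighbour x y = hamming_neighbour y x.
Proof.
rewrite /hamming_neighbour; congr (_ == _); apply: eq_card => i; rewrite !inE.
by rewrite eq_sym.
Qed.

Lemma hn_c L (p : 'S_L) f (x y : genotype L) :
  hamming_neighbour (cube_sym p f x) (cube_sym p f y) = hamming_neighbour x y.
Proof.
rewrite /hamming_neighbour.
have -> : [set i | cube_sym p f x i != cube_sym p f y i] = p @^-1: [set j | x j != y j].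
  apply/setP => i; rewrite !inE /cube_sym !ffunE.
  by case: (f i); case: (x (p i)); case: (y (p i)).
rewrite card_preimset //; exact: perm_inj.
Qed.

Unset Implicit Arguments.
Theorem theorem2 (R : realType) (L : nat) (w : genotype L -> R)
    (hL : (L == 4%N) || (L == 5%N))
    (hw0 : forall g, 0 <= w g)
    (hgen : generic w)
    (hstair : exists T : {set {set genotype L}},
                staircase_triangulation T /\ induces w T) :
  (#|[set g : genotype L | peak w g]| <= 4)%N.
Proof.
case: hstair => T [[p [f HT]] Hind].
set c := cube_sym p f.
have pk x : peak w (c x) -> forall h, hamming_neighbour x h -> w (c h) < w (c x).
  by move=> /forallP H h hn; have := H (c h); rewrite hn_c hn.
have bad_false x y : badg x y -> peak w (c x) -> peak w (c y) -> False.
  case/andP => /cards1P [i0 Ei] /card_gt0P [j hj] px py.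
  have hi : x i0 && ~~ y i0.
    have : i0 \in [set i | x i && ~~ y i] by rewrite Ei set11.
    by rewrite inE.
  rewrite inE in hj.
  have K := key_ineq HT Hind hi hj.
  have h1 : hamming_neighbour x (gmeet x y).
    rewrite /hamming_neighbour.
    have -> : [set i | x i != gmeet x y i] = [set i | x i && ~~ y i].
      by apply/setP => i; rewrite !inE /gmeet ffunE; case: (x i); case: (y i).
    by rewrite Ei cards1.
  have h2 : hamming_neighbour y (gjoin x y).
    rewrite /hamming_neighbour.
    have -> : [set i | y i != gjoin x y i] = [set i | x i && ~~ y i].
      by apply/setP => i; rewrite !inE /gjoin ffunE; case: (x i); case: (y i).
    by rewrite Ei cards1.
  have := pk _ px _ h1; have := pk _ py _ h2; move=> a1 a2; by have := lt_trans K (ltrD a2 a1); rewrite ltxx.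
set Q := [set g | peak w (c g)].
have -> : #|[set g | peak w g]| = #|Q|.
  rewrite -(card_preimset _ (@cube_sym_inj L p f)); apply: eq_card => g.
  by rewrite !inE.
have okQ x y : x \in Q -> y \in Q -> x != y -> okg x y.
  move=> hx hy nxy; rewrite inE in hx; rewrite inE in hy; rewrite /okg nxy /=.
  apply/and3P; split.
  - apply/negP => hn; have := pk _ hx _ hn.
    have := pk _ hy x; rewrite hn_sym hn => /(_ isT) a1 a2.
    by have := lt_trans a1 a2; rewrite ltxx.
  - by apply/negP => hb; exact: bad_false hb hx hy.
  - by apply/negP => hb; exact: bad_false hb hy hx.
rewrite leqNgt; apply/negP => H5.
pose s := enum Q.
have us : uniq s := enum_uniq (mem Q).
have sz : size s = #|Q| by rewrite cardE.
pose x0 := [ffun _ => false] : genotype L.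
have P i j : (i < 5)%N -> (j < 5)%N -> i != j -> okg (nth x0 s i) (nth x0 s j).
  move=> hi hj nij.
  have hi' : (i < size s)%N by rewrite sz (leq_trans hi H5).
  have hj' : (j < size s)%N by rewrite sz (leq_trans hj H5).
  apply: okQ.
  - by rewrite -mem_enum; apply: mem_nth.
  - by rewrite -mem_enum; apply: mem_nth.
  - by rewrite nth_uniq.
exact: (no5 hL (P 0 1 isT isT isT)%N (P 0 2 isT isT isT)%N (P 1 2 isT isT isT)%N
  (P 0 3 isT isT isT)%N (P 1 3 isT isT isT)%N (P 2 3 isT isT isT)%N
  (P 0 4 isT isT isT)%N (P 1 4 isT isT isT)%N (P 2 4 isT isT isT)%N (P 3 4 isT isT isT)%N).
Qed.
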